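(* Let $G$ be a finite nilpotent group and let $\mathcal F$ be a family of subgroups of $G$ which contains $G$ and all the maximal subgroups of $G$ and is closed under taking intersections. Let $\mathcal C: X_t<X_{t-1}<\dots<X_1<X_0$ be a chain of elements of $\mathcal F$. If $\mathcal C$ cannot be refined in $\mathcal F$ (i.e. no element of $\mathcal F$ can be added to $\mathcal C$ so that the result is still a chain), then $t\geq u$, where $u$ is the composition length of $G/\Phi(G)$ and $\Phi(G)$ is the Frattini subgroup of $G$. *)

(* Defs.v *)
From mathcomp Require Import all_boot all_fingroup all_solvable.
Set Implicit Arguments. Unset Strict Implicit. Unset Printing Implicit Defensive.
Import GroupScope.

Definition is_chain (gT : finGroupType) (S : {set {group gT}}) : Prop :=
  forall A B : {group gT}, A \in S -> B \in S -> A \subset B \/ B \subset A.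

(* The chain X_t < ... < X_0, given as X 0, ..., X t. *)
Definition chain_set (gT : finGroupType) (t : nat) (X : nat -> {group gT}) :
  {set {group gT}} := [set X (nat_of_ord i) | i : 'I_t.+1].

(* Main.v *)
Require Import Defs.
From mathcomp Require Import all_boot all_fingroup all_solvable.
From mathcomp Require Import zify.
Import GroupScope.
Set Implicit Arguments. Unset Strict Implicit.

Definition Om (N n : nat) : nat := \sum_(p < N) logn p n.

Lemma OmM N m n : 0 < m -> 0 < n -> Om N (m * n) = Om N m + Om N n.
Proof.
by move=> m0 n0; rewrite /Om -big_split; apply: eq_bigr => p _; rewrite lognM.
Qed.

Lemma Om1 N : Om N 1 = 0.
Proof. by rewrite /Om big1 // => p _; rewrite logn1. Qed.

Lemma Om_prime N p : prime p -> Om N p <= 1.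
Proof.
move=> pp; rewrite /Om.
under eq_bigr => q _ do rewrite logn_prime //.
case: (ltnP p N) => [pN | Np].
  rewrite (bigD1 (Ordinal pN)) //= eqxx big1 // => q /eqP nq.
  by apply/eqP; rewrite eqb0; apply/eqP => e; apply: nq; apply: val_inj.
rewrite big1 // => q _; apply/eqP; rewrite eqb0; apply/eqP => e.
by have := ltn_ord q; rewrite e ltnNge Np.
Qed.

Lemma Om_gt0 N n : 1 < n -> n < N -> 0 < Om N n.
Proof.
move=> n1 nN; have n0 : 0 < n by lia.
have pN : pdiv n < N by apply: leq_ltn_trans (pdiv_leq n0) nN.
rewrite /Om (bigD1 (Ordinal pN)) //=.
have : 0 < logn (pdiv n) n by rewrite logn_gt0 mem_primes pdiv_prime // n0 pdiv_dvd.
lia.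
Qed.

Lemma Om_dvd N d n : 0 < n -> d %| n -> Om N d <= Om N n.
Proof.
move=> n0 dn; have d0 : 0 < d by apply: dvdn_gt0 dn.
rewrite -(divnK dn) OmM ?leq_addl //.
by rewrite divn_gt0 // dvdn_leq.
Qed.

Lemma comps_Om (hT : finGroupType) N (K : {group hT}) s :
  #|K| < N -> comps K s -> size s <= Om N #|K|.
Proof.
elim: s K => [//|H s IH] K ltK cs.
have csH := comps_cons cs.
have/compsP [_ /= /andP[mx _]] := cs.
have sHK := maxnormal_sub mx; have pHK := maxnormal_proper mx.
rewrite -(Lagrange sHK) OmM ?cardG_gt0 ?indexg_gt0 //.
have HN : #|H| < N by apply: leq_ltn_trans (subset_leq_card sHK) ltK.
have iN : #|K : H| < N.
  by apply: leq_ltn_trans ltK; apply: dvdn_leq (cardG_gt0 K) (dvdn_indexg K H).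
have i1 : 1 < #|K : H| by rewrite indexg_gt1; case/andP: pHK.
have := Om_gt0 i1 iN; have := IH H HN csH => /=; lia.
Qed.

Lemma nil_max_normal (gT : finGroupType) (G M : {group gT}) :
  nilpotent G -> maximal M G -> M <| G.
Proof.
move=> nilG; case/maxgroupP=> /andP[sMP sPM] maxM; rewrite /normal sMP.
have:= subsetIl G 'N(M); rewrite subEproper.
case/predU1P=> [/setIidPl-> // | /maxM/= SNM]; case/negP: sPM.
rewrite (nilpotent_sub_norm nilG sMP) //.
by rewrite SNM // subsetI sMP normG.
Qed.

Lemma nil_max_prime (gT : finGroupType) (G M : {group gT}) :
  nilpotent G -> maximal M G -> prime #|G : M|.
Proof.
move=> nilG maxM; have nMG := nil_max_normal nilG maxM.
apply: index_maxnormal_sol_prime; first exact: nilpotent_sol.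
case/maxgroupP: maxM => pMG maxM.
apply/maxgroupP; split; first by rewrite pMG normal_norm.
by move=> H /andP[pHG _]; apply: maxM.
Qed.

Lemma max_idx (gT : finGroupType) (G M A : {group gT}) :
  nilpotent G -> maximal M G -> A \subset G -> ~~ (A \subset M) ->
  #|A : A :&: M| = #|G : M|.
Proof.
move=> nilG maxM sAG nAM.
have nMG := nil_max_normal nilG maxM.
have nMA : A \subset 'N(M) := subset_trans sAG (normal_norm nMG).
have AMg : group_set (A * M) by rewrite -norm_joinEl // groupP.
pose AM := Group AMg.
have AMG : A * M = G.
  case/maxgroupP: maxM => /andP[sMG _] mx.
  have sAMG : AM \subset G by rewrite /= mul_subG.
  case: (boolP (AM \proper G)) => [pr|].
    have := mx AM pr (mulG_subr _ _) => e.
    by case/negP: nAM; rewrite -[gval M]/(gval (gval M)) -e /= mulG_subl.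
  by rewrite /proper sAMG /= negbK => sGAM; apply/eqP; rewrite eqEsubset sAMG.
have e1 := mul_cardG A M; rewrite AMG in e1.
have sAI : A :&: M \subset A := subsetIl _ _.
have sMG : M \subset G by case/andP: nMG.
rewrite -(Lagrange sAI) -(Lagrange sMG) in e1.
apply/eqP; rewrite -(eqn_pmul2l (cardG_gt0 (A :&: M)%G)) -(eqn_pmul2l (cardG_gt0 M)).
apply/eqP; move: e1.
set a := #|A :&: M|; set b := #|A : A :&: M|; set c := #|M|; set d := #|G : M|.
move=> e1; rewrite /= in e1 *.
nia.
Qed.

Lemma prime_idx_maximal (gT : finGroupType) (G M : {group gT}) :
  M \subset G -> prime #|G : M| -> maximal M G.
Proof.
move=> sMP /primeP[lt1PM pr_PM].
apply/maxgroupP; rewrite properEcard sMP -(Lagrange sMP).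
rewrite -{1}(muln1 #|M|) ltn_pmul2l //; split=> // H sHP sMH.
apply/eqP; rewrite eq_sym eqEcard sMH.
case/orP: (pr_PM _ (indexSg sMH (proper_sub sHP))) => /eqP iM.
  by rewrite -(Lagrange sMH) iM muln1 /=.
by have:= proper_card sHP; rewrite -(Lagrange sMH) iM Lagrange ?ltnn.
Qed.

Lemma join_idx (gT : finGroupType) (G M M' A : {group gT}) :
  nilpotent G -> maximal M G -> maximal M' G -> A \subset G ->
  ~~ (A \subset M) -> ~~ (M \subset M') -> A :&: M \subset M' ->
  #|G : A <*> (M :&: M')| = #|G : M'|.
Proof.
move=> nilG maxM maxM' sAG nAM nMM' sAMM'.
have nMG := nil_max_normal nilG maxM; have nM'G := nil_max_normal nilG maxM'.
have sMG : M \subset G by case/andP: nMG.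
have nDG := normalI nMG nM'G.
have nDA : A \subset 'N(M :&: M') := subset_trans sAG (normal_norm nDG).
set D := (M :&: M')%G.
set K := (A <*> D)%G.
have KE : gval K = A * D by rewrite /= norm_joinEl.
have sKG : K \subset G by rewrite /= join_subG sAG; case/andP: nDG.
have e1 := max_idx nilG maxM sAG nAM.
have e2 := max_idx nilG maxM' sMG nMM'.
have e3 := Lagrange sMG.
have eAD : A :&: D = A :&: M.
  by rewrite /D /= setIA; apply/setIidPl.
have e5 := mul_cardG A D; rewrite -KE eAD in e5.
have e6 := Lagrange (subsetIl A M).
have e7 := Lagrange (subsetIl M M').
have e8 := Lagrange sKG.
rewrite -/D in e2 e7.
have p1 := cardG_gt0 (A :&: M)%G.
have p2 := cardG_gt0 D.
have p3 := cardG_gt0 K.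
have e9 : #|K| = (#|G : M| * #|D|)%N.
  apply/eqP; rewrite -(eqn_pmul2r p1); apply/eqP.
  rewrite /= in e5 e6 e1 *.
  by rewrite -e5 -e6 e1 [RHS]mulnC mulnA.
apply/eqP; rewrite -(eqn_pmul2l p3); apply/eqP.
rewrite e8 e9 -e3 -e7 e2.
by rewrite [LHS]mulnC mulnA.
Qed.
Unset Implicit Arguments. Set Strict Implicit.

Theorem mainTheorem4 (gT : finGroupType) (G : {group gT})
  (F : {set {group gT}}) (t : nat) (X : nat -> {group gT}) :
  nilpotent G ->
  (forall H : {group gT}, H \in F -> H \subset G) ->
  G \in F ->
  (forall M : {group gT}, maximal M G -> M \in F) ->
  (forall H K : {group gT}, H \in F -> K \in F -> (H :&: K)%G \in F) ->
  (forall i, i <= t -> X i \in F) ->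
  (forall i, i < t -> X i.+1 \proper X i) ->
  (forall Y : {group gT}, Y \in F -> Y \notin chain_set t X ->
     ~ is_chain (Y |: chain_set t X)) ->
  forall s : seq {group coset_of 'Phi(G)},
    comps (G / 'Phi(G))%G s -> size s <= t.
Proof.
move=> nilG sFG GF maxF intF XF Xpr unref s cs.
have mono : forall i j, i <= j -> j <= t -> X j \subset X i.
  move=> i j; elim: j => [|j IH] ij jt; first by have -> : i = 0 by lia.
  case: (ltnP j i) => [ji|ij']; first by have -> : i = j.+1 by lia.
  exact: subset_trans (proper_sub (Xpr j jt)) (IH ij' (ltnW jt)).
have sXG : forall i, i <= t -> X i \subset G by move=> i it; apply: sFG; apply: XF.
have inchain : forall Y : {group gT}, Y \in F ->
    (forall j, j <= t -> (X j \subset Y) || (Y \subset X j)) ->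
    exists2 j, j <= t & Y = X j.
  move=> Y YF cmp.
  case: (boolP (Y \in chain_set t X)) => [/imsetP [i _ ->] | nY].
    by exists i => //; have := ltn_ord i.
  exfalso; apply: (unref Y YF nY) => A B.
  rewrite !in_setU1 => /predU1P[->|/imsetP[i _ ->]] /predU1P[->|/imsetP[j _ ->]].
  - by left.
  - have := cmp j (ltn_ord j); case/orP => h; [right|left] => //.
  - have := cmp i (ltn_ord i); case/orP => h; [left|right] => //.
  - have it := ltn_ord i; have jt := ltn_ord j.
    case: (leqP i j) => ij; [right|left]; apply: mono; lia.
have GX0 : G \subset X 0.
  have [j jt GX] : exists2 j, j <= t & G = X j.
    by apply: inchain => // j jt; rewrite sXG.
  by rewrite GX; apply: mono.
have key : forall i (M : {group gT}), i <= t -> maximal M G ->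
    (i < t -> X i.+1 \subset M) ->
    (X i \subset M) \/ (i < t /\ X i :&: M = X i.+1).
  move=> i M it maxM hM.
  have YF : (X i :&: M)%G \in F by apply: intF; [apply: XF | apply: maxF].
  have [j jt YX] : exists2 j, j <= t & (X i :&: M)%G = X j.
    apply: inchain => // j jt.
    case: (leqP j i) => ji.
      by apply/orP; right; apply: subset_trans (subsetIl _ _) (mono j i ji it).
    apply/orP; left; rewrite subsetI.
    have h1 : X j \subset X i.+1 by apply: mono.
    have h2 : X i.+1 \subset X i by apply: mono => //; lia.
    have h3 : i < t by lia.
    by rewrite (subset_trans h1 (hM h3)) (subset_trans h1 h2).
  case: (leqP j i) => ji.
    left; apply: subset_trans (mono j i ji it) _.
    by rewrite -YX subsetIr.
  right; split; first lia.
  apply/eqP; rewrite eqEsubset; apply/andP; split.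
    have -> : X i :&: M = X j by rewrite -YX.
    by apply: mono.
  have h3 : i < t by lia.
  by rewrite subsetI (hM h3) mono //; lia.
pose C i := bigcap_group (fun M : {group gT} => maximal_eq M G && (X i \subset M))
                         (fun M => M).
have CE : forall i, gval (C i) =
   \bigcap_(M : {group gT} | maximal_eq M G && (X i \subset M)) M by [].
have mGG : maximal_eq G G by rewrite /maximal_eq eqxx.
have sCG : forall i, i <= t -> C i \subset G.
  by move=> i it; rewrite CE; apply: (bigcap_inf G) => /=; rewrite mGG sXG.
have C0 : gval (C 0) = G.
  apply/eqP; rewrite eqEsubset sCG //= CE; apply/bigcapsP => M /andP[_ sM].
  exact: subset_trans GX0 sM.
have Ct : gval (C t) = 'Phi(G).
  rewrite CE /Frattini; apply: eq_bigl => M.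
  case mM: (maximal_eq M G); rewrite //=.
  case/predU1P: mM => [->|maxM]; first by rewrite sXG.
  by have [//|[]] := key t M (leqnn t) maxM (fun h => False_ind _ (elimF idP (ltnn t) h)); lia.
set N := #|gT|.+1.
have step : forall i, i < t -> Om N #|C i| <= Om N #|C i.+1| + 1.
  move=> i it.
  have sCC : C i.+1 \subset C i.
    rewrite !CE; apply/bigcapsP => M /andP[mM sM]; apply: (bigcap_inf M).
    by rewrite mM (subset_trans (proper_sub (Xpr i it)) sM).
  rewrite -(Lagrange sCC) OmM ?cardG_gt0 ?indexg_gt0 // leq_add2l.
  case: (pickP (fun M : {group gT} =>
                 [&& maximal M G, X i.+1 \subset M & ~~ (X i \subset M)]))
    => [M /and3P[maxM sXM nXM] | none]; last first.
    have eC : C i.+1 = C i.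
      apply: val_inj; change (gval (C i.+1) = gval (C i)).
      rewrite !CE; apply: eq_bigl => M.
      apply/andP/andP => [[mM sM]|[mM sM]]; split => //.
        case/predU1P: (mM) => [->|maxM]; first exact: sXG (ltnW it).
        by apply/negbNE; have := none M; rewrite /= maxM sM /= => ->.
      exact: subset_trans (proper_sub (Xpr i it)) sM.
    by rewrite eC indexgg Om1.
  have [sXiM|[_ eqM]] := key i M (ltnW it) maxM (fun _ => sXM).
    by rewrite sXiM in nXM.
  have sub : C i :&: M \subset C i.+1.
    rewrite [gval (C i.+1)]CE; apply/bigcapsP => M' /andP[mM' sM'].
    case/predU1P: mM' => [->|maxM'].
      exact: subset_trans (subsetIl _ _) (sCG i (ltnW it)).
    case: (boolP (X i \subset M')) => sXM'.
      apply: subset_trans (subsetIl _ _) _; rewrite CE; apply: (bigcap_inf M').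
      by rewrite /maximal_eq maxM' orbT sXM'.
    case: (boolP (M \subset M')) => sMM'.
      exact: subset_trans (subsetIr _ _) sMM'.
    have [h|[_ eqM']] := key i M' (ltnW it) maxM' (fun _ => sM').
      by rewrite h in sXM'.
    have sXiMM' : X i :&: M \subset M' by rewrite eqM.
    have iK := join_idx nilG maxM maxM' (sXG i (ltnW it)) nXM sMM' sXiMM'.
    set K := (X i <*> (M :&: M'))%G in iK.
    have maxK : maximal K G.
      have sMG : M \subset G by case/andP: (nil_max_normal nilG maxM).
      have sKG : K \subset G.
        by rewrite join_subG (sXG i (ltnW it)) (subset_trans (subsetIl M M') sMG).
      have pK : prime #|G : K| by rewrite iK; exact: nil_max_prime nilG maxM'.
      exact: prime_idx_maximal sKG pK.
    have sCK : C i \subset K.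
      rewrite CE; apply: (bigcap_inf K).
      by rewrite /maximal_eq maxK orbT joing_subl.
    apply: subset_trans (setSI _ sCK) _.
    have nDX : X i \subset 'N(M :&: M').
      apply: subset_trans (sXG i (ltnW it)) (normal_norm _).
      by apply: normalI; apply: nil_max_normal.
    rewrite /K /= norm_joinEl // setIC -group_modr ?subsetIl //.
    by rewrite mul_subG ?subsetIr // setIC eqM.
  apply: (@leq_trans (Om N #|C i : (C i :&: M)%G|)).
    apply: Om_dvd; first exact: indexg_gt0.
    exact: indexgS.
  case: (boolP (C i \subset M)) => sCM.
    have -> : (C i :&: M)%G = C i by apply: val_inj; exact: (setIidPl sCM).
    by rewrite indexgg Om1.
  rewrite (max_idx nilG maxM (sCG i (ltnW it)) sCM).
  by apply: Om_prime; apply: nil_max_prime.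
have chainOm : forall i, i <= t -> Om N #|C 0| <= Om N #|C i| + i.
  elim=> [|i IH] it; first by rewrite addn0.
  have := step i it; have := IH (ltnW it); lia.
have := chainOm t (leqnn t); rewrite C0 Ct.
rewrite -(Lagrange (Phi_sub G)) OmM ?cardG_gt0 ?indexg_gt0 // leq_add2l => hOm.
apply: leq_trans hOm.
have cardQ : #|G / 'Phi(G)| = #|G : 'Phi(G)|.
  by apply: card_quotient; apply: normal_norm; apply: Phi_normal.
rewrite -cardQ; apply: comps_Om => //.
rewrite cardQ /N ltnS; apply: leq_trans (max_card _).
by apply: dvdn_leq (cardG_gt0 G) (dvdn_indexg _ _).
Qed.
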